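(* Consider subgradient-push as in the setting below. Suppose $\{\mathbb G(t)\}$ is uniformly strongly connected by sub-sequences of length $L$ and $\|g_i(t)\|\le G$ for all $i,t$, for some $G>0$. Let $\eta,\mu$ be constants as described below. Then for all $t\ge0$ and $i\in\mathcal V$, $$\Big\|z_i(t+1)-\frac1n\sum_{k=1}^n\big(x_k(t)-\alpha(t)g_k(t)\big)\Big\|\le\frac8\eta\mu^t\sum_{k=1}^n\|x_k(0)-\alpha(0)g_k(0)\|+\frac{8nG}{\eta}\sum_{s=1}^t\mu^{t-s}\alpha(s).$$ If in addition $\{\alpha(t)\}$ is positive, non-increasing, with $\sum_t\alpha(t)=\infty$ and $\sum_t\alpha^2(t)<\infty$, then for all $t\ge0$ and $i\in\mathcal V$, $$\Big\|z_i(t+1)-\frac1n\sum_{k=1}^n\big(x_k(t)-\alpha(t)g_k(t)\big)\Big\|\le\frac8\eta\mu^t\sum_{k=1}^n\|x_k(0)-\alpha(0)g_k(0)\|+\frac{8nG}{\eta(1-\mu)}\big(\alpha(0)\mu^{t/2}+\alpha(\lceil t/2\rceil)\big).$$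
   Context: Setting. Fix $n$ agents, $\mathcal V=\{1,\dots,n\}$. For each $t\in\{0,1,2,\dots\}$, $\mathbb G(t)=(\mathcal V,\mathcal E(t))$ is a directed graph containing a self-arc $(i,i)$ at every vertex; $\mathcal N_i(t)=\{j:(j,i)\in\mathcal E(t)\}$ and $\mathcal N_i^-(t)=\{k:(i,k)\in\mathcal E(t)\}$. Weights $w_{ij}(t)$ are positive for $j\in\mathcal N_i(t)$ and $w_{ij}(t)=0$ otherwise, and satisfy: there is $\beta>0$ with $w_{ij}(t)\ge\beta$ whenever $j\in\mathcal N_i(t)$, and $\sum_{j\in\mathcal N_i^-(t)}w_{ji}(t)=1$ for all $i,t$. Write $\Phi_W(t,\tau)=W(t-1)\cdots W(\tau)$ for $t>\tau$, where $W(t)=[w_{ij}(t)]$. The sequence $\{\mathbb G(t)\}$ is uniformly strongly connected by sub-sequences of length $L$ if for every $t\ge0$ the directed graph with vertex set $\mathcal V$ and edge set $\bigcup_{k=t}^{t+L-1}\mathcal E(k)$ is strongly connected. Subgradient-push: each agent $i$ has a convex $f_i:\mathbb R^d\to\mathbb R$; with stepsizes $\alpha(t)>0$, $x_i(t+1)=\sum_{j\in\mathcal N_i(t)}w_{ij}(t)[x_j(t)-\alpha(t)g_j(t)]$, $x_i(0)\in\mathbb R^d$; $y_i(t+1)=\sum_{j\in\mathcal N_i(t)}w_{ij}(t)y_j(t)$, $y_i(0)=1$; $z_i(t)=x_i(t)/y_i(t)$; and $g_i(t)$ is a subgradient of $f_i$ at $z_i(t)$. Constants: $\eta>0$ is any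 constant with $y_i(t)\ge\eta$ for all $i,t$ (such exists, e.g. $\eta=n^{-nL}$); $\mu\in(0,1)$ is any constant for which there exist stochastic vectors $\phi(t)\in\mathbb R^n$ with $|[\Phi_W(t+1,s)]_{ij}-\phi_i(t)|\le4\mu^{t-s}$ for all $i,j\in\mathcal V$, $t\ge s\ge0$ (e.g. $\mu=(1-n^{-nL})^{1/L}$). *)

(* Defs.v *)
From HB Require Import structures.
From mathcomp Require Import all_boot all_order all_algebra.
From mathcomp Require Import all_classical all_reals all_analysis.
Set Implicit Arguments. Unset Strict Implicit. Unset Printing Implicit Defensive.
Import Order.TTheory GRing.Theory Num.Theory.
Local Open Scope ring_scope.

Section Defs.
Variable R : realType.

Definition dotv (d : nat) (u v : 'rV[R]_d) : R := \sum_(k < d) u 0 k * v 0 k.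
Definition enorm (d : nat) (v : 'rV[R]_d) : R := Num.sqrt (\sum_(k < d) v 0 k ^+ 2).

Definition convex_fun (d : nat) (f : 'rV[R]_d -> R) : Prop :=
  forall (u v : 'rV[R]_d) (l : R), 0 <= l -> l <= 1 ->
    f (l *: u + (1 - l) *: v) <= l * f u + (1 - l) * f v.

Definition is_subgradient (d : nat) (f : 'rV[R]_d -> R) (z g : 'rV[R]_d) : Prop :=
  forall u : 'rV[R]_d, f z + dotv g (u - z) <= f u.

Definition Wmx (n : nat) (w : nat -> 'I_n -> 'I_n -> R) (t : nat) : 'M[R]_n :=
  \matrix_(i, j) w t i j.

Fixpoint Phi_aux (n : nat) (w : nat -> 'I_n -> 'I_n -> R) (tau k : nat) : 'M[R]_n :=
  match k with
  | 0 => 1%:M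
  | k'.+1 => Wmx w (tau + k') *m Phi_aux w tau k'
  end.

Definition PhiW (n : nat) (w : nat -> 'I_n -> 'I_n -> R) (t tau : nat) : 'M[R]_n :=
  Phi_aux w tau (t - tau).

Definition stochastic_vec (n : nat) (phi : 'I_n -> R) : Prop :=
  (forall i, 0 <= phi i) /\ \sum_(i < n) phi i = 1.
End Defs.

(* E t j i  <->  (j,i) is an arc of G(t), i.e. j \in N_i(t), i \in N_j^-(t) *)
Definition strongly_connected (n : nat) (e : rel 'I_n) : Prop :=
  forall i j : 'I_n, connect e i j.

Definition uniformly_strongly_connected (n : nat) (E : nat -> rel 'I_n) (L : nat) : Prop :=
  forall t : nat,
    strongly_connected [rel u v | [exists k : 'I_L, E (t + k)%N u v]].

(* Main.v *)
Require Import Defs.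
From HB Require Import structures.
From mathcomp Require Import all_boot all_order all_algebra.
From mathcomp Require Import all_classical all_reals all_analysis.
From mathcomp Require Import ring lra zify.
Import Order.TTheory GRing.Theory Num.Theory numFieldNormedType.Exports.
Local Open Scope ring_scope.
Set Implicit Arguments. Unset Strict Implicit.


Lemma enorm_ge0 (R : realType) d (v : 'rV[R]_d) : 0 <= enorm v.
Proof. by rewrite /enorm sqrtr_ge0. Qed.

Lemma enormZ (R : realType) d (a : R) (v : 'rV[R]_d) :
  enorm (a *: v) = `|a| * enorm v.
Proof.
rewrite /enorm; under eq_bigr do rewrite mxE exprMn.
by rewrite -mulr_sumr sqrtrM ?sqr_ge0 // sqrtr_sqr.
Qed.

Lemma enormN (R : realType) d (v : 'rV[R]_d) : enorm (- v) = enorm v.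
Proof. by rewrite -scaleN1r enormZ normrN normr1 mul1r. Qed.

Lemma enorm0 (R : realType) d : enorm (0 : 'rV[R]_d) = 0.
Proof.
rewrite /enorm big1 ?sqrtr0 // => k _; by rewrite mxE expr0n.
Qed.

Lemma sum_sq_eq0 (R : realType) d (u : 'rV[R]_d) :
  Num.sqrt (\sum_k u 0 k ^+ 2) = 0 -> forall k, u 0 k = 0.
Proof.
move=> /eqP; rewrite sqrtr_eq0 => H k.
have H0 : \sum_k u 0 k ^+ 2 = 0.
  by apply/le_anti; rewrite H sumr_ge0 // => i _; rewrite sqr_ge0.
have := psumr_eq0P (fun i _ => sqr_ge0 (u 0 i)) H0 (i:=k) isT.
by move/eqP; rewrite sqrf_eq0 => /eqP.
Qed.

Lemma cauchy_schwarz (R : realType) d (u v : 'rV[R]_d) :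
  \sum_k u 0 k * v 0 k <= enorm u * enorm v.
Proof.
rewrite /enorm.
set A := \sum_k u 0 k ^+ 2; set B := \sum_k v 0 k ^+ 2.
set a := Num.sqrt A; set b := Num.sqrt B.
have A0 : 0 <= A by rewrite sumr_ge0 // => i _; rewrite sqr_ge0.
have B0 : 0 <= B by rewrite sumr_ge0 // => i _; rewrite sqr_ge0.
have a0 : 0 <= a by rewrite sqrtr_ge0.
have b0 : 0 <= b by rewrite sqrtr_ge0.
have [az|anz] := eqVneq a 0.
  rewrite az mul0r big1 // => k _; by rewrite (sum_sq_eq0 az) mul0r.
have [bz|bnz] := eqVneq b 0.
  rewrite bz mulr0 big1 // => k _; by rewrite (sum_sq_eq0 bz) mulr0.
have H : 0 <= \sum_k (b * u 0 k - a * v 0 k) ^+ 2.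
  by rewrite sumr_ge0 // => i _; rewrite sqr_ge0.
have E : \sum_k (b * u 0 k - a * v 0 k) ^+ 2
   = b ^+ 2 * A - 2 * a * b * \sum_k u 0 k * v 0 k + a ^+ 2 * B.
  rewrite /A /B !mulr_sumr -sumrB -big_split /=; apply: eq_bigr => k _; ring.
rewrite E /a /b !sqr_sqrtr // -/a -/b in H.
have ab0 : 0 < a * b by rewrite mulr_gt0 // lt0r ?anz ?bnz.
have : 2 * (a * b) * \sum_k u 0 k * v 0 k <= 2 * (a * b) * (a * b).
  have -> : 2 * (a * b) * (a * b) = B * A + A * B.
    by rewrite -(sqr_sqrtr A0) -(sqr_sqrtr B0) -/a -/b; ring.
  lra.
have h2 : 0 < 2 * (a * b) by rewrite mulr_gt0.
by rewrite ler_pM2l.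
Qed.

Lemma enormD (R : realType) d (u v : 'rV[R]_d) :
  enorm (u + v) <= enorm u + enorm v.
Proof.
have cs := cauchy_schwarz u v.
have h0 : 0 <= enorm u + enorm v by rewrite addr_ge0 ?enorm_ge0.
rewrite -(ger0_norm h0) -sqrtr_sqr {1}/enorm ler_sqrt ?sqr_ge0 //.
have -> : \sum_k (u + v) 0 k ^+ 2 =
   \sum_k u 0 k ^+ 2 + 2 * \sum_k u 0 k * v 0 k + \sum_k v 0 k ^+ 2.
  rewrite mulr_sumr -!big_split /=; apply: eq_bigr => k _; rewrite mxE; ring.
have -> : (enorm u + enorm v) ^+ 2 =
   enorm u ^+ 2 + 2 * (enorm u * enorm v) + enorm v ^+ 2 by ring.
have s1 : forall w : 'rV[R]_d, 0 <= \sum_k w 0 k ^+ 2.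
  by move=> w; rewrite sumr_ge0 // => i _; rewrite sqr_ge0.
rewrite /enorm !sqr_sqrtr ?s1 //.
move: cs; rewrite /enorm; lra.
Qed.

Lemma enormB (R : realType) d (u v : 'rV[R]_d) :
  enorm (u - v) <= enorm u + enorm v.
Proof. by rewrite -(enormN v) enormD. Qed.

Lemma enorm_sum (R : realType) d (I : Type) (r : seq I) (P : pred I)
  (F : I -> 'rV[R]_d) :
  enorm (\sum_(i <- r | P i) F i) <= \sum_(i <- r | P i) enorm (F i).
Proof.
elim/big_rec2: _ => [|i y1 y2 _ Hy]; first by rewrite enorm0.
by apply: le_trans (enormD _ _) _; rewrite lerD2l.
Qed.


Definition Xm (R : realType) n d (x : 'I_n -> 'rV[R]_d) : 'M[R]_(n, d) :=
  \matrix_i x i.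

Lemma PhiW_S (R : realType) n (w : nat -> 'I_n -> 'I_n -> R) t s :
  (s <= t)%N -> PhiW w t.+1 s = Wmx w t *m PhiW w t s.
Proof. by move=> h; rewrite /PhiW subSn //= subnKC. Qed.

Lemma PhiW_id (R : realType) n (w : nat -> 'I_n -> 'I_n -> R) t :
  PhiW w t t = 1%:M.
Proof. by rewrite /PhiW subnn. Qed.

Lemma row_mulE (R : realType) n d (i : 'I_n) (P : 'M[R]_n) (x : 'I_n -> 'rV[R]_d) :
  row i (P *m Xm x) = \sum_j P i j *: x j.
Proof.
rewrite row_mul mulmx_sum_row; apply: eq_bigr => j _; by rewrite mxE rowK.
Qed.

Lemma rowB' (R : realType) m d (i : 'I_m) (A B : 'M[R]_(m, d)) :
  row i (A - B) = row i A - row i B.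
Proof. by apply/rowP => k; rewrite !mxE. Qed.

Lemma rowZ' (R : realType) m d (i : 'I_m) (a : R) (A : 'M[R]_(m, d)) :
  row i (a *: A) = a *: row i A.
Proof. by apply/rowP => k; rewrite !mxE. Qed.

Lemma row_sum' (R : realType) m d (i : 'I_m) (I : Type) (r : seq I) (P : pred I)
  (F : I -> 'M[R]_(m, d)) :
  row i (\sum_(s <- r | P s) F s) = \sum_(s <- r | P s) row i (F s).
Proof.
apply/rowP => k; rewrite mxE !summxE; apply: eq_bigr => s _; by rewrite mxE.
Qed.

Section Core.
Variables (R : realType) (n d : nat) (E : nat -> rel 'I_n)
  (w : nat -> 'I_n -> 'I_n -> R) (alpha : nat -> R)
  (x : nat -> 'I_n -> 'rV[R]_d) (y : nat -> 'I_n -> R)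
  (g : nat -> 'I_n -> 'rV[R]_d).
Hypothesis Hw0 : forall t i j, ~~ E t j i -> w t i j = 0.
Hypothesis Hcol : forall t i, \sum_(k | E t i k) w t k i = 1.
Hypothesis Hx : forall t i, x t.+1 i = \sum_(j | E t j i) w t i j *: (x t j - alpha t *: g t j).
Hypothesis Hy0 : forall i, y 0 i = 1.
Hypothesis Hy : forall t i, y t.+1 i = \sum_(j | E t j i) w t i j * y t j.

Lemma xfull t i : x t.+1 i = \sum_j w t i j *: (x t j - alpha t *: g t j).
Proof.
rewrite Hx [RHS](bigID (fun j => E t j i)) /= [X in _ = _ + X]big1 ?addr0 //.
by move=> j hj; rewrite Hw0 // scale0r.
Qed.

Lemma yfull t i : y t.+1 i = \sum_j w t i j * y t j.
Proof.
rewrite Hy [RHS](bigID (fun j => E t j i)) /= [X in _ = _ + X]big1 ?addr0 //.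
by move=> j hj; rewrite Hw0 // mul0r.
Qed.

Lemma colsum t j : \sum_i w t i j = 1.
Proof.
rewrite -(Hcol t j) (bigID (fun k => E t j k)) /= [X in _ + X]big1 ?addr0 //.
by move=> k hk; rewrite Hw0.
Qed.

Definition u0 := fun i => x 0 i - alpha 0 *: g 0 i.

Lemma Xrec t : Xm (x t.+1) = Wmx w t *m (Xm (x t) - alpha t *: Xm (g t)).
Proof.
apply/row_matrixP => i; rewrite /Xm rowK xfull row_mul mulmx_sum_row.
apply: eq_bigr => j _; rewrite !mxE; congr (_ *: _); by rewrite rowB' rowZ' /Xm !rowK.
Qed.

Lemma Xrep t : Xm (x t.+1) = PhiW w t.+1 0 *m Xm u0
   - \sum_(1 <= s < t.+1) alpha s *: (PhiW w t.+1 s *m Xm (g s)).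
Proof.
elim: t => [|t IH].
  rewrite Xrec big_geq // subr0 /PhiW /= add0n mulmx1; congr (_ *m _).
  by apply/row_matrixP => i; rewrite rowB' rowZ' /Xm !rowK.
rewrite Xrec IH [in RHS]big_nat_recr // (@PhiW_S _ _ w t.+1 0) // (@PhiW_S _ _ w t.+1 t.+1) // PhiW_id mulmx1.
have -> : \sum_(1 <= s < t.+1) alpha s *: (PhiW w t.+2 s *m Xm (g s)) =
    \sum_(1 <= s < t.+1) alpha s *: (Wmx w t.+1 *m PhiW w t.+1 s *m Xm (g s)).
  apply: eq_big_nat => s /andP [_ hs]; by rewrite (@PhiW_S _ _ w t.+1 s) // ltnW.
rewrite !mulmxBr mulmx_sumr mulmxA opprD addrA; congr (_ - _ - _).
  by apply: eq_bigr => s _; rewrite -scalemxAr mulmxA.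
by rewrite -scalemxAr.
Qed.

Lemma Yrep t i : y t.+1 i = \sum_j PhiW w t.+1 0 i j.
Proof.
suff : forall t, \col_i y t.+1 i = PhiW w t.+1 0 *m const_mx 1.
  move/(_ t)/matrixP/(_ i 0) => H; rewrite !mxE in H; rewrite H.
  by apply: eq_bigr => j _; rewrite [const_mx _ _ _]mxE; exact: mulr1.
elim=> [|s IH].
  apply/matrixP => k l; rewrite !mxE yfull /PhiW /= add0n mulmx1.
  by apply: eq_bigr => j _; rewrite Hy0 /Wmx !mxE.
rewrite PhiW_S // -mulmxA -IH.
apply/matrixP => k l; rewrite !mxE yfull; apply: eq_bigr => j _; by rewrite /Wmx !mxE.
Qed.

Lemma xrow t i : x t.+1 i = \sum_j PhiW w t.+1 0 i j *: u0 j
   - \sum_(1 <= s < t.+1) alpha s *: \sum_j PhiW w t.+1 s i j *: g s j.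
Proof.
have := congr1 (row i) (Xrep t); rewrite /Xm rowK => ->.
rewrite rowB' row_sum' row_mulE; congr (_ - _).
by apply: eq_bigr => s _; rewrite rowZ' row_mulE.
Qed.

Lemma Ssum t : \sum_k (x t k - alpha t *: g t k) =
  \sum_k u0 k - \sum_(1 <= s < t.+1) alpha s *: \sum_k g s k.
Proof.
elim: t => [|t IH]; first by rewrite big_geq // subr0.
rewrite big_nat_recr //= sumrB -scaler_sumr.
have -> : \sum_k x t.+1 k = \sum_k (x t k - alpha t *: g t k).
  under eq_bigr do rewrite xfull.
  rewrite exchange_big /=; apply: eq_bigr => j _.
  by rewrite -scaler_suml colsum scale1r.
by rewrite IH opprD addrA.
Qed.

Variables (G eta mu : R) (phi : nat -> 'I_n -> R).
Hypothesis Halpha : forall t, 0 < alpha t.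
Hypothesis HG : forall t i, enorm (g t i) <= G.
Hypothesis Heta : 0 < eta.
Hypothesis Hyeta : forall t i, eta <= y t i.
Hypothesis Hmu0 : 0 < mu.
Hypothesis Hmu1 : mu < 1.
Hypothesis Hphi : forall t s i j, (s <= t)%N ->
  `|PhiW w t.+1 s i j - phi t i| <= 4 * mu ^+ (t - s).

Lemma sum_gbound' s : \sum_k enorm (g s k) <= n%:R * G.
Proof.
apply: le_trans (ler_sum _ (fun k _ => HG s k)) _.
by rewrite sumr_const card_ord mulr_natl.
Qed.

Lemma sum_gbound s : enorm (\sum_k g s k) <= n%:R * G.
Proof. apply: le_trans (sum_gbound' s); exact: enorm_sum. Qed.

Lemma Dsum_bound t s i (v : 'I_n -> 'rV[R]_d) : (s <= t)%N ->
  enorm (\sum_j (PhiW w t.+1 s i j - phi t i) *: v j)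
  <= 4 * mu ^+ (t - s) * \sum_j enorm (v j).
Proof.
move=> hs; apply: le_trans; first exact: enorm_sum.
rewrite mulr_sumr; apply: ler_sum => j _; rewrite enormZ.
by apply: ler_wpM2r; [exact: enorm_ge0 | exact: Hphi].
Qed.

Lemma bound1 t i :
  enorm ((y t.+1 i)^-1 *: x t.+1 i
         - n%:R^-1 *: \sum_(k < n) (x t k - alpha t *: g t k))
  <= 8 / eta * mu ^+ t * \sum_(k < n) enorm (u0 k)
     + 8 * n%:R * G / eta * \sum_(1 <= s < t.+1) mu ^+ (t - s) * alpha s.
Proof.
have n0 : (0 < n)%N by case: i => k /= hk; exact: (leq_ltn_trans (leq0n k) hk).
have nR : n%:R != 0 :> R by rewrite pnatr_eq0 -lt0n.
have G0 : 0 <= G by apply: le_trans (HG 0 i); exact: enorm_ge0.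
set ph := phi t i.
set a := \sum_j PhiW w t.+1 0 i j *: u0 j.
set b := \sum_k u0 k.
set c := \sum_(1 <= s < t.+1) alpha s *: \sum_j PhiW w t.+1 s i j *: g s j.
set e := \sum_(1 <= s < t.+1) alpha s *: \sum_k g s k.
set Y := y t.+1 i.
have HX : x t.+1 i = a - c by rewrite xrow.
have HS : \sum_k (x t k - alpha t *: g t k) = b - e by rewrite Ssum.
set V1 := \sum_j (PhiW w t.+1 0 i j - ph) *: u0 j.
set V2 := \sum_(1 <= s < t.+1) alpha s *: \sum_j (PhiW w t.+1 s i j - ph) *: g s j.
set D := \sum_j (PhiW w t.+1 0 i j - ph).
have EV1 : V1 = a - ph *: b.
  by rewrite /V1 /a /b scaler_sumr -sumrB; apply: eq_bigr => j _; rewrite scalerBl.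
have EV2 : V2 = c - ph *: e.
  rewrite /V2 /c /e scaler_sumr -sumrB; apply: eq_big_nat => s _.
  rewrite [ph *: _]scalerA [ph * _]mulrC -scalerA -scalerBr; congr (_ *: _).
  rewrite scaler_sumr -sumrB; apply: eq_bigr => j _; by rewrite scalerBl.
have ED : D = Y - n%:R * ph.
  by rewrite /D sumrB /Y Yrep sumr_const card_ord mulr_natl.
have Yp : 0 < Y := lt_le_trans Heta (Hyeta _ _).
have Y0 : Y != 0 by rewrite gt_eqF.
have key : Y^-1 *: x t.+1 i - n%:R^-1 *: \sum_k (x t k - alpha t *: g t k)
    = Y^-1 *: (V1 - V2 - (n%:R^-1 * D) *: (b - e)).
  rewrite HX HS EV1 EV2 ED; apply/rowP => k; rewrite !mxE; field.
  by apply/andP.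
rewrite key enormZ ger0_norm ?invr_ge0 ?(ltW Yp) //.
set b' := \sum_k enorm (u0 k).
set T2 := \sum_(1 <= s < t.+1) alpha s * (4 * mu ^+ (t - s) * (n%:R * G)).
set T4 := \sum_(1 <= s < t.+1) alpha s * (n%:R * G).
have B1 : enorm V1 <= 4 * mu ^+ t * b'.
  by have := Dsum_bound i u0 (leq0n t); rewrite subn0.
have B2 : enorm V2 <= T2.
  apply: le_trans; first exact: enorm_sum.
  apply: ler_sum_nat => s /andP [_ hs].
  rewrite enormZ gtr0_norm //; apply: ler_wpM2l; first exact: ltW.
  apply: le_trans (@Dsum_bound t s i (g s) hs) _.
  apply: ler_wpM2l; last exact: sum_gbound'.
  by rewrite mulr_ge0 // exprn_ge0 // ltW.
have B3 : `|n%:R^-1 * D| <= 4 * mu ^+ t.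
  rewrite normrM ger0_norm ?invr_ge0 ?ler0n //.
  rewrite -[X in _ <= X](mulKf nR); apply: ler_wpM2l; first by rewrite invr_ge0 ler0n.
  apply: le_trans (ler_norm_sum _ _ _) _.
  apply: le_trans (ler_sum _ (fun j _ => Hphi i j (leq0n t))) _.
  by rewrite sumr_const card_ord subn0 [n%:R * _]mulr_natl.
have B4 : enorm (b - e) <= b' + T4.
  apply: le_trans (enormB _ _) _; apply: lerD; first exact: enorm_sum.
  apply: le_trans; first exact: enorm_sum.
  apply: ler_sum_nat => s _; rewrite enormZ gtr0_norm //.
  by apply: ler_wpM2l; [exact: ltW | exact: sum_gbound].
have B5 : 4 * mu ^+ t * T4 <= T2.
  rewrite /T4 /T2 mulr_sumr; apply: ler_sum_nat => s /andP [_ hs].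
  have -> : 4 * mu ^+ t * (alpha s * (n%:R * G)) = (alpha s * (n%:R * G) * 4) * mu ^+ t by ring.
  have -> : alpha s * (4 * mu ^+ (t - s) * (n%:R * G)) = (alpha s * (n%:R * G) * 4) * mu ^+ (t - s) by ring.
  apply: ler_wpM2l; first by rewrite !mulr_ge0 // ?ler0n // ltW.
  by apply: ler_wiXn2l; rewrite ?ltW // leq_subr.
have T12 : enorm (V1 - V2 - (n%:R^-1 * D) *: (b - e))
    <= enorm V1 + enorm V2 + `|n%:R^-1 * D| * enorm (b - e).
  by apply: le_trans (enormB _ _) _; rewrite enormZ lerD2r enormB.
have B6 : `|n%:R^-1 * D| * enorm (b - e) <= 4 * mu ^+ t * (b' + T4).
  by apply: ler_pM => //; exact: enorm_ge0.
have ET2 : 8 * n%:R * G * \sum_(1 <= s < t.+1) mu ^+ (t - s) * alpha s = 2 * T2.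
  rewrite /T2 !mulr_sumr; apply: eq_bigr => s _; ring.
have -> : 8 / eta * mu ^+ t * b' + 8 * n%:R * G / eta * \sum_(1 <= s < t.+1) mu ^+ (t - s) * alpha s
   = eta^-1 * (8 * mu ^+ t * b' + 8 * n%:R * G * \sum_(1 <= s < t.+1) mu ^+ (t - s) * alpha s) by ring.
rewrite ET2; apply: ler_pM.
- by rewrite invr_ge0 ltW.
- exact: enorm_ge0.
- by rewrite lef_pV2 ?posrE // Hyeta.
- lra.
Qed.

End Core.


Lemma geo_part (R : realType) (mu : R) t h : (h <= t.+1)%N ->
  (1 - mu) * \sum_(0 <= s < h) mu ^+ (t - s) = mu ^+ (t.+1 - h) - mu ^+ t.+1.
Proof.
elim: h => [|h IH] hh; first by rewrite big_geq // subn0 subrr mulr0.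
rewrite big_nat_recr //= mulrDr (IH (ltnW hh)) subSn // subSS exprS; ring.
Qed.

Lemma alpha_mono (R : realType) (alpha : nat -> R) :
  (forall t, alpha t.+1 <= alpha t) -> forall m k, (m <= k)%N -> alpha k <= alpha m.
Proof.
move=> Hm m; elim=> [|k IH]; first by rewrite leqn0 => /eqP ->.
rewrite leq_eqVlt => /orP [/eqP -> // | hlt].
exact: le_trans (Hm k) (IH hlt).
Qed.

Lemma tail_bound (R : realType) (alpha : nat -> R) (mu : R) t :
  0 < mu -> mu < 1 -> (forall s, 0 < alpha s) ->
  (forall s, alpha s.+1 <= alpha s) ->
  \sum_(1 <= s < t.+1) mu ^+ (t - s) * alpha s
  <= (alpha 0%N * powR mu (t%:R / 2) + alpha (uphalf t)) / (1 - mu).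
Proof.
move=> mu0 mu1 ha hm.
set h := uphalf t.
have h2 : (h.*2 <= t.+1)%N.
  rewrite /h uphalfK; case: (odd t) => /=; by rewrite ?add1n ?add0n.
have ht : (h <= t.+1)%N by apply: leq_trans h2; rewrite -addnn leq_addr.
have mu0' : 0 <= mu by exact: ltW.
have mu1' : mu <= 1 by exact: ltW.
have pos : forall s, 0 <= mu ^+ (t - s) by move=> s; exact: exprn_ge0.
set q1 := \sum_(0 <= s < h) mu ^+ (t - s).
set q2 := \sum_(h <= s < t.+1) mu ^+ (t - s).
have q10 : 0 <= q1 by rewrite sumr_ge0.
have r1E := geo_part mu ht; rewrite -/q1 in r1E.
have r12E : (1 - mu) * (q1 + q2) = 1 - mu ^+ t.+1.
  by rewrite /q1 /q2 -big_cat_nat // geo_part // subnn expr0.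
have S1 : \sum_(1 <= s < t.+1) mu ^+ (t - s) * alpha s
    <= alpha 0%N * q1 + alpha h * q2.
  apply: le_trans (_ : \sum_(0 <= s < t.+1) mu ^+ (t - s) * alpha s <= _).
    rewrite [X in _ <= X](big_ltn (ltn0Sn t)) lerDr.
    by rewrite mulr_ge0 // ltW.
  rewrite (big_cat_nat (leq0n h) ht) /=; apply: lerD.
    rewrite /q1 mulr_sumr; apply: ler_sum_nat => s _.
    rewrite mulrC; apply: ler_wpM2r => //; exact: alpha_mono.
  rewrite /q2 mulr_sumr; apply: ler_sum_nat => s /andP [hs _].
  rewrite mulrC; apply: ler_wpM2r => //; exact: alpha_mono.
have k2 : (t <= (t.+1 - h) * 2)%N.
  move: h2 ht; rewrite -muln2; lia.
have P1 : mu ^+ (t.+1 - h) <= powR mu (t%:R / 2).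
  rewrite -powR_mulrn //; apply: ger_powR; first by rewrite mu0 mu1'.
  by rewrite ler_pdivrMr // -(natrM R) ler_nat.
have omu : 0 < 1 - mu by rewrite subr_gt0.
rewrite ler_pdivlMr //.
apply: le_trans (_ : (alpha 0%N * q1 + alpha h * q2) * (1 - mu) <= _).
  by apply: ler_wpM2r => //; exact: ltW.
have -> : (alpha 0%N * q1 + alpha h * q2) * (1 - mu)
   = alpha 0%N * ((1 - mu) * q1) + alpha h * ((1 - mu) * (q1 + q2) - (1 - mu) * q1) by ring.
rewrite r12E r1E; apply: lerD.
  apply: ler_wpM2l; first exact: ltW.
  apply: le_trans P1; rewrite lerBlDr lerDl; exact: exprn_ge0.
rewrite -[X in _ <= X]mulr1; apply: ler_wpM2l; first exact: ltW.
have := exprn_ge0 t.+1 mu0'; have := exprn_ge0 (t.+1 - h) mu0'.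
have : mu ^+ t.+1 <= mu ^+ (t.+1 - h) by apply: ler_wiXn2l => //; exact: leq_subr.
lra.
Qed.

Unset Implicit Arguments.
Local Open Scope classical_set_scope.

Theorem lemma8 (R : realType) (n d L : nat)
  (E : nat -> rel 'I_n) (w : nat -> 'I_n -> 'I_n -> R) (beta : R)
  (f : 'I_n -> 'rV[R]_d -> R) (alpha : nat -> R)
  (x : nat -> 'I_n -> 'rV[R]_d) (y : nat -> 'I_n -> R)
  (g : nat -> 'I_n -> 'rV[R]_d) (G eta mu : R) :
  (* graphs: self-arcs, uniform strong connectivity *)
  (forall t i, E t i i) ->
  uniformly_strongly_connected E L ->
  (* weights *)
  0 < beta ->
  (forall t i j, E t j i -> beta <= w t i j) ->
  (forall t i j, ~~ E t j i -> w t i j = 0) ->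
  (forall t i, \sum_(k | E t i k) w t k i = 1) ->
  (* convex objectives, positive stepsizes *)
  (forall i, convex_fun (f i)) ->
  (forall t, 0 < alpha t) ->
  (* subgradient-push *)
  (forall t i, x t.+1 i = \sum_(j | E t j i) w t i j *: (x t j - alpha t *: g t j)) ->
  (forall i, y 0 i = 1) ->
  (forall t i, y t.+1 i = \sum_(j | E t j i) w t i j * y t j) ->
  (forall t i, is_subgradient (f i) ((y t i)^-1 *: x t i) (g t i)) ->
  (* bounded subgradients *)
  0 < G -> (forall t i, enorm (g t i) <= G) ->
  (* the constant eta *)
  0 < eta -> (forall t i, eta <= y t i) ->
  (* the constant mu *)
  0 < mu -> mu < 1 ->
  (exists phi : nat -> 'I_n -> R,
      (forall t, stochastic_vec (phi t)) /\
      (forall t s i j, (s <= t)%N ->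
          `|PhiW w t.+1 s i j - phi t i| <= 4 * mu ^+ (t - s))) ->
  (forall t i,
     enorm ((y t.+1 i)^-1 *: x t.+1 i
            - n%:R^-1 *: \sum_(k < n) (x t k - alpha t *: g t k))
     <= 8 / eta * mu ^+ t * \sum_(k < n) enorm (x 0%N k - alpha 0%N *: g 0%N k)
        + 8 * n%:R * G / eta * \sum_(1 <= s < t.+1) mu ^+ (t - s) * alpha s)
  /\
  ((forall t, alpha t.+1 <= alpha t) ->
   [series alpha k]_k @ \oo --> +oo ->
   cvgn [series alpha k ^+ 2]_k ->
   forall t i,
     enorm ((y t.+1 i)^-1 *: x t.+1 i
            - n%:R^-1 *: \sum_(k < n) (x t k - alpha t *: g t k))
     <= 8 / eta * mu ^+ t * \sum_(k < n) enorm (x 0%N k - alpha 0%N *: g 0%N k)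
        + 8 * n%:R * G / (eta * (1 - mu))
          * (alpha 0%N * powR mu (t%:R / 2) + alpha (uphalf t))).
Proof.
move=> Hself Hconn Hbeta Hwb Hw0 Hcol Hconv Halpha Hx Hy0 Hy Hsub HG0 HG Heta Hyeta
  Hmu0 Hmu1 [phi [_ Hphi]].
have B : forall t i,
  enorm ((y t.+1 i)^-1 *: x t.+1 i
         - n%:R^-1 *: \sum_(k < n) (x t k - alpha t *: g t k))
  <= 8 / eta * mu ^+ t * \sum_(k < n) enorm (x 0%N k - alpha 0%N *: g 0%N k)
     + 8 * n%:R * G / eta * \sum_(1 <= s < t.+1) mu ^+ (t - s) * alpha s.
  move=> t i; apply: bound1; eassumption.
split => [//|Hmono _ _ t i].
apply: le_trans (B t i) _; rewrite lerD2l.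
have T := tail_bound t Hmu0 Hmu1 Halpha Hmono.
set A := alpha 0%N * powR mu (t%:R / 2) + alpha (uphalf t).
have -> : 8 * n%:R * G / (eta * (1 - mu)) * A = 8 * n%:R * G / eta * (A / (1 - mu)).
  by rewrite invfM; ring.
apply: ler_wpM2l => //.
by rewrite !mulr_ge0 ?invr_ge0 ?ler0n // ltW.
Qed.
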